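(* Let $k=3$, $t\ge 2$, $d=2^t-1$, $n\ge d$ and $j=n-d$. Then in $\mathbb{F}_2[w_2,w_3]$, \[ r_{j-1}q_n+w_3r_{j-2}q_{n-1}+r_jq_{n-2}=0, \] a homogeneous relation of degree $(d-2)+3j$.
   Context: In $\mathbb{F}_2[w_2,w_3]$ ($\deg w_2=2,\deg w_3=3$): $q_0=1$, $q_m=0$ for $m<0$, $q_m=w_2q_{m-2}+w_3q_{m-3}$ for $m\ge1$; and $r_0=1$, $r_m=0$ for $m<0$, $r_{m+1}=w_2r_m+w_3^2r_{m-2}$ for $m\ge 0$ (so $\deg r_m=2m$). *)

(* Defs.v *)
From HB Require Import structures.
From mathcomp Require Import all_boot all_algebra.
From mathcomp Require Export all_boot all_algebra.
From mathcomp Require Export mpoly.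
Set Implicit Arguments. Unset Strict Implicit. Unset Printing Implicit Defensive.
Import GRing.Theory.
Local Open Scope ring_scope.

Notation P := {mpoly 'F_2[2]}.

(* the generators w2 (degree 2) and w3 (degree 3) *)
Definition w2 : P := 'X_0.
Definition w3 : P := 'X_1.

(* q3 m = (q_m, q_{m-1}, q_{m-2}), with q_0 = 1, q_m = 0 for m < 0,
   q_m = w2 q_{m-2} + w3 q_{m-3} for m >= 1 *)
Fixpoint q3 (m : nat) : P * P * P :=
  match m with
  | 0 => (1, 0, 0)
  | m'.+1 => let: (a, b, c) := q3 m' in (w2 * b + w3 * c, a, b)
  end.

(* r3 m = (r_m, r_{m-1}, r_{m-2}), with r_0 = 1, r_m = 0 for m < 0,
   r_{m+1} = w2 r_m + w3^2 r_{m-2} for m >= 0 *)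
Fixpoint r3 (m : nat) : P * P * P :=
  match m with
  | 0 => (1, 0, 0)
  | m'.+1 => let: (a, b, c) := r3 m' in (w2 * a + w3 ^+ 2 * c, a, b)
  end.

Definition q (m : int) : P :=
  match m with Posz k => (q3 k).1.1 | Negz _ => 0 end.
Definition r (m : int) : P :=
  match m with Posz k => (r3 k).1.1 | Negz _ => 0 end.

(* Main.v *)
Require Import Defs.
From mathcomp Require Import all_boot all_algebra mpoly.
From mathcomp Require Import ring.
From Stdlib Require Import Lia.
From mathcomp.zify Require Import zify.
Import GRing.Theory.
Local Open Scope ring_scope.

Lemma c2 (x : P) : x *+ 2 = 0.
Proof. rewrite -mulr_natr. have -> : (2%:R : P) = (2%:R : 'F_2)%:MP by rewrite rmorph_nat.
have -> : (2%:R : 'F_2) = 0 by apply/eqP. by rewrite mpolyC0 mulr0. Qed.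

Lemma qN (m : int) : m < 0 -> q m = 0.
Proof. by case: m. Qed.
Lemma rN (m : int) : m < 0 -> r m = 0.
Proof. by case: m. Qed.

Lemma qP k : q (Posz k) = (q3 k).1.1. Proof. by []. Qed.
Lemma rP k : r (Posz k) = (r3 k).1.1. Proof. by []. Qed.

Lemma q3S k : q3 k.+1 = (w2 * (q3 k).1.2 + w3 * (q3 k).2, (q3 k).1.1, (q3 k).1.2).
Proof. by rewrite /=; case: (q3 k) => [[a b] c]. Qed.
Lemma r3S k : r3 k.+1 = (w2 * (r3 k).1.1 + w3 ^+ 2 * (r3 k).2, (r3 k).1.1, (r3 k).1.2).
Proof. by rewrite /=; case: (r3 k) => [[a b] c]. Qed.

Lemma q3_snd k : (q3 k).1.2 = q (k%:Z - 1).
Proof.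
case: k => [|k]; first by rewrite /= ?qN.
rewrite q3S [LHS]/= (_ : Posz k.+1 - 1 = Posz k) //; lia.
Qed.
Lemma q3_thd k : (q3 k).2 = q (k%:Z - 2).
Proof.
case: k => [|k]; first by rewrite /= ?qN.
rewrite q3S [LHS]/= q3_snd (_ : Posz k.+1 - 2 = Posz k - 1) //; lia.
Qed.
Lemma r3_snd k : (r3 k).1.2 = r (k%:Z - 1).
Proof.
case: k => [|k]; first by rewrite /= ?rN.
rewrite r3S [LHS]/= (_ : Posz k.+1 - 1 = Posz k) //; lia.
Qed.
Lemma r3_thd k : (r3 k).2 = r (k%:Z - 2).
Proof.
case: k => [|k]; first by rewrite /= ?rN.
rewrite r3S [LHS]/= r3_snd (_ : Posz k.+1 - 2 = Posz k - 1) //; lia.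
Qed.

Lemma qrec (m : int) : 1 <= m -> q m = w2 * q (m - 2) + w3 * q (m - 3).
Proof.
case: m => // -[|k] // _.
rewrite qP q3S [LHS]/= q3_snd q3_thd.
rewrite (_ : Posz k - 1 = Posz k.+1 - 2); last lia.
by rewrite (_ : Posz k - 2 = Posz k.+1 - 3); last lia.
Qed.

Lemma rrec (m : int) : 0 <= m -> r (m + 1) = w2 * r m + w3 ^+ 2 * r (m - 2).
Proof.
case: m => // k _.
rewrite (_ : Posz k + 1 = Posz k.+1); last lia.
by rewrite rP r3S [LHS]/= r3_thd.
Qed.

Lemma lemA (j : nat) (m : int) : 0 <= m ->
  r (j%:Z - 1) * q (m + j%:Z) + w3 * r (j%:Z - 2) * q (m + j%:Z - 1)
  + r j%:Z * q (m + j%:Z - 2) = w3 ^+ j * q (m - 2).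
Proof.
move=> Hm; elim: j => [|j IH].
  rewrite (rN (_ - 1)) // (rN (_ - 2)) // addr0 mul0r mulr0 !add0r expr0 mul1r.
  by rewrite mul0r add0r.
set J := Posz j.
rewrite (_ : Posz j.+1 - 1 = J); last lia.
rewrite (_ : Posz j.+1 - 2 = J - 1); last lia.
rewrite (_ : m + Posz j.+1 - 1 = m + J); last lia.
rewrite (_ : m + Posz j.+1 - 2 = m + J - 1); last lia.
rewrite (_ : Posz j.+1 = J + 1); last lia.
rewrite rrec; last lia.
rewrite (qrec (m + (J + 1))); last lia.
rewrite (_ : m + (J + 1) - 2 = m + J - 1); last lia.
rewrite (_ : m + (J + 1) - 3 = m + J - 2); last lia.
rewrite [w3 ^+ j.+1]exprS -[w3 * w3 ^+ j * _]mulrA -IH.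
rewrite /J; apply/eqP; rewrite -subr_eq0; apply/eqP.
rewrite (_ : _ - _ = (w2 * r J * q (m + J - 1)) *+ 2); first by rewrite c2.
ring.
Qed.

Lemma q0 : q 0 = 1. Proof. by []. Qed.
Lemma q1 : q 1 = 0. Proof. by rewrite /q /= !mulr0 addr0. Qed.
Lemma q2 : q 2 = w2. Proof. by rewrite /q /= !mulr0 mulr1 addr0. Qed.

Lemma qadd (k : nat) (n : int) : 0 <= n ->
  q (k%:Z + n) = q n * q k%:Z + q (n + 1) * q (k%:Z - 1) + w3 * q (n - 1) * q (k%:Z - 2).
Proof.
elim/ltn_ind: k n => -[|[|[|l]]] IH n Hn.
- rewrite add0r q0 (qN (Posz 0 - 1)) // (qN (Posz 0 - 2)) //.
  by rewrite !mulr0 mulr1 !addr0.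
- rewrite (qN (Posz 1 - 2)) // (_ : Posz 1 - 1 = 0) // q0 q1.
  rewrite !mulr0 mulr1 add0r addr0.
  by rewrite (_ : n + 1 = Posz 1 + n) //; lia.
- rewrite (_ : Posz 2 - 1 = 1) // (_ : Posz 2 - 2 = 0) // q0 q1 q2 mulr0 addr0 mulr1.
  rewrite qrec; last lia.
  rewrite (_ : Posz 2 + n - 2 = n); last lia.
  rewrite (_ : Posz 2 + n - 3 = n - 1); last lia.
  by rewrite mulrC.
have h1 : q (Posz l.+3 + n) = w2 * q (Posz l.+1 + n) + w3 * q (Posz l + n).
  by rewrite qrec; [congr (_ * q _ + _ * q _); lia | lia].
have h2 := IH l.+1 (ltnW (ltnSn _)) n Hn.
have h3 := IH l (leqW (ltnW (ltnSn _))) n Hn.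
have e1 : q (Posz l.+3) = w2 * q (Posz l.+1) + w3 * q (Posz l).
  by rewrite qrec; [congr (_ * q _ + _ * q _); lia | lia].
have e2 : q (Posz l.+3 - 1) = w2 * q (Posz l.+1 - 1) + w3 * q (Posz l - 1).
  by rewrite qrec; [congr (_ * q _ + _ * q _); lia | lia].
have e3 : q (Posz l.+3 - 2) = w2 * q (Posz l.+1 - 2) + w3 * q (Posz l - 2).
  by rewrite qrec; [congr (_ * q _ + _ * q _); lia | lia].
rewrite h1 h2 h3 e1 e2 e3; ring.
Qed.

Lemma qodd (k : nat) : q (Posz k.+1 + Posz k) = w3 * q (Posz k - 1) ^+ 2.
Proof.
rewrite qadd //.
rewrite (_ : Posz k.+1 - 1 = Posz k); last lia.
rewrite (_ : Posz k.+1 - 2 = Posz k - 1); last lia.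
rewrite (_ : Posz k + 1 = Posz k.+1); last lia.
rewrite mulrC -mulr2n c2 add0r; ring.
Qed.

Lemma qzero t : (1 <= t)%N -> q ((2 ^ t)%N%:Z - 3) = 0.
Proof.
elim: t => // -[|t] IH _; first by rewrite qN.
have hp : (2 <= 2 ^ t.+1)%N by rewrite -{1}(expn1 2) leq_exp2l.
rewrite [(2 ^ t.+2)%N]expnS.
move: IH; set p := (2 ^ t.+1)%N => IH.
have := qodd (p - 2)%N.
rewrite (_ : Posz (p - 2).+1 + Posz (p - 2) = Posz (2 * p) - 3); last lia.
rewrite (_ : Posz (p - 2) - 1 = Posz p - 3); last lia.
by rewrite IH // expr0n /= mulr0.
Qed.

Theorem mainTheorem12 (t n : nat) :
  (2 <= t)%N -> (2 ^ t - 1 <= n)%N ->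
  let d : int := (2 ^ t - 1)%N in
  let j : int := n%:Z - d in
  r (j - 1) * q n%:Z + w3 * r (j - 2) * q (n%:Z - 1) + r j * q (n%:Z - 2) = 0.
Proof.
move=> Ht Hn d j.
have hp : (4 <= 2 ^ t)%N by rewrite (_ : 4 = 2 ^ 2)%N // leq_exp2l.
have ej : j = Posz (n - (2 ^ t - 1))%N by rewrite /j /d; lia.
have en : n%:Z = Posz (2 ^ t - 1)%N + Posz (n - (2 ^ t - 1))%N by lia.
rewrite ej en lemA //.
rewrite (_ : Posz (2 ^ t - 1)%N - 2 = Posz (2 ^ t)%N - 3); last lia.
by rewrite qzero ?mulr0 //; lia.
Qed.
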